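(* Let $q\ge 2$ and $n\ge q+1$. If $\mathcal C\subseteq[q]^n$ is a code with insdel distance $d_I(\mathcal C)=2n-2$, then $|\mathcal C|\le q$.
   Context: $[q]=\{1,\dots,q\}$. For $\mathbf u,\mathbf v\in[q]^n$, the insdel distance $d_I(\mathbf u,\mathbf v)$ is the minimum number of insertions and deletions transforming $\mathbf u$ into $\mathbf v$; equivalently $d_I(\mathbf u,\mathbf v)=2n-2\ell_{\rm LCS}(\mathbf u,\mathbf v)$ where $\ell_{\rm LCS}$ is the length of a longest common subsequence. $d_I(\mathcal C)$ is the minimum insdel distance between distinct codewords. *)

(* Defs.v *)
From mathcomp Require Import all_boot.
Set Implicit Arguments. Unset Strict Implicit. Unset Printing Implicit Defensive.

(* Alphabet [q] is modelled by 'I_q (symbols 0..q-1); words of [q]^n are n.-tuple 'I_q. *)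

Definition lcs_len (T : eqType) n (u v : n.-tuple T) : nat :=
  \max_(m : n.-tuple bool | subseq (mask m u) v) size (mask m u).

Definition insdel_dist (T : eqType) n (u v : n.-tuple T) : nat :=
  2 * n - 2 * lcs_len u v.

Definition min_insdel_dist_eq (q n : nat) (C : {set n.-tuple 'I_q}) (d : nat) : Prop :=
  (exists u v, [/\ u \in C, v \in C, u != v & insdel_dist u v = d]) /\
  (forall u v, u \in C -> v \in C -> u != v -> d <= insdel_dist u v).

(* Main.v *)
Require Import Defs.
From mathcomp Require Import all_boot zify.

Lemma notuniq_sub2 (T : eqType) (s : seq T) :
  ~~ uniq s -> exists a, subseq [:: a; a] s.
Proof.
elim: s => [//|x s IH] /=; rewrite negb_and negbK; case/orP => [xs|/IH [a Ha]].
  by exists x; rewrite /= eqxx sub1seq.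
by exists a; exact: (subseq_trans Ha (subseq_cons s x)).
Qed.

Lemma lcs_ge2 (T : eqType) n (u v : n.-tuple T) a :
  subseq [:: a; a] u -> subseq [:: a; a] v -> 2 <= lcs_len u v.
Proof.
move=> /subseqP [m Hm Hu] Hv.
have Hm' : size m == n by rewrite Hm size_tuple.
rewrite /lcs_len.
have := @leq_bigmax_cond _ (fun m0 : n.-tuple bool => subseq (mask m0 u) v)
  (fun m0 => size (mask m0 u)) (Tuple Hm').
by rewrite /= -Hu Hv => /(_ isT).
Qed.

Theorem lemma3p5 (q n : nat) (C : {set n.-tuple 'I_q}) :
  2 <= q -> q + 1 <= n ->
  min_insdel_dist_eq C (2 * n - 2) ->
  #|C| <= q.
Proof.
case: q C => [|[|q]] C // _ Hn [_ Hd].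
pose g (u : n.-tuple 'I_q.+2) := odflt ord0 [pick a | subseq [:: a; a] u].
have Hg (u : n.-tuple 'I_q.+2) : exists a, subseq [:: a; a] (tval u).
  apply: notuniq_sub2; apply/negP => Hu.
  have := uniq_leq_size Hu (fun x _ => mem_enum predT x).
  rewrite size_tuple -cardE card_ord; move: Hn; rewrite addn1 => Hn H.
  by have := leq_trans Hn H; rewrite ltnn.
have HgP (u : n.-tuple 'I_q.+2) : subseq [:: g u; g u] u.
  rewrite /g; case: pickP => [a /= ->//|/= H0].
  by case: (Hg u) => a Ha; move: (H0 a); rewrite Ha.
have inj : {in C &, injective g}.
  move=> u v uC vC Euv; apply/eqP; apply/negPn/negP => Nuv.
  have := Hd u v uC vC Nuv; have := @lcs_ge2 _ _ u v (g u) (HgP u) (etrans (congr1 (fun a => subseq [:: a; a] v) Euv) (HgP v)).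
  rewrite /insdel_dist => H2 H1; lia.
rewrite -(card_in_imset inj); apply: leq_trans (max_card _) _; by rewrite card_ord.
Qed.
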